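(* Let $R$ be a ring. The assignment $$\gamma_{0,R}([M]) \;=\; \sum_{b\in M} s(b)\,[P_b]\in K_0(R)$$ gives a well-defined homomorphism $\gamma_{0,R}:\mathsf{Cob}_0(R)\to K_0(R)$, and $\gamma_{0,R}$ is an isomorphism of abelian groups.
   Context: $K_0(R)$ is the Grothendieck group of finitely generated projective left $R$-modules: generators $[P]$, relations $[P_2]=[P_1]+[P_3]$ whenever $P_2\cong P_1\oplus P_3$. An $R$-decorated 0-foam $M$ is a finite set of points $b$, each carrying a sign $s(b)\in\{+1,-1\}$ and a finitely generated projective left $R$-module $P_b$. We write $-M$ for $M$ with all signs reversed and $\sqcup$ for disjoint union. An $R$-decorated 1-foam $U$ is the topological realization of a finite oriented graph. Multiple edges, loops and vertexless circle components are allowed. Its interior vertices are trivalent, and each interior vertex is of one of two types: - an ''in'' vertex, with two edges oriented into it and one out of it; - an ''out'' vertex, with one edge in and two out. At each vertex the two edges of the same orientation type are called thin and the remaining one thick. $U$ may also have univalent boundary vertices. $U$ carries a flat bundle of finitely generated projective left $R$-modules over the complement of its trivalent vertices, so that parallel transport along edges gives isomorphisms between fibers and each circle has a monodromy automorphism. At each trivalent vertex an isomorphism $P_{\mathrm{thick}}\cong P_{\mathrm{thin},1}\oplus P_{\mathrm{thin},2}$ is fixed between the fibers at points near the vertex on the thick edge and the two thin edges. The boundary $\partial U$ is the $R$-decorated 0-foam of univalent vertices $b$. Such a $b$ has the fiber $P_b$ there, with sign $+1$ if the edge at $b$ is oriented towards $b$ and $-1$ otherwise. $U$ is a cobordism from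 $M_0$ to $M_1$ if $\partial U\cong M_1\sqcup(-M_0)$ (preserving decorations). $\mathsf{Cob}_0(R)$ is the set of $R$-decorated 0-foams modulo the equivalence relation generated by cobordism. It is an abelian group under disjoint union, with $0$ the empty foam and inverse $[M]\mapsto[-M]$. *)

(* Defs.v *)
From HB Require Import structures.
From mathcomp Require Import all_boot all_order all_algebra.
From Stdlib Require Import Relation_Operators Permutation.
Set Implicit Arguments. Unset Strict Implicit. Unset Printing Implicit Defensive.
Import GRing.Theory.
Local Open Scope ring_scope.

Section Foams.
Variable R : pzRingType.

Definition fin_gen (P : lmodType R) : Prop :=
  exists s : seq P, forall x : P,
    exists c : 'I_(size s) -> R, x = \sum_(i < size s) c i *: tnth (in_tuple s) i.

Definition projective (P : lmodType R) : Prop :=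
  forall (M N : lmodType R) (g : {linear M -> N}) (f : {linear P -> N}),
    (forall y : N, exists x : M, g x = y) ->
    exists h : {linear P -> M}, forall x : P, g (h x) = f x.

Record FGP := { fgp_mod :> lmodType R; fgp_fg : fin_gen fgp_mod;
                fgp_proj : projective fgp_mod }.

Definition mod_iso (P Q : lmodType R) : Prop :=
  exists f : {linear P -> Q}, bijective f.

Definition iso_sum (P2 P1 P3 : lmodType R) : Prop :=
  mod_iso P2 (P1 * P3)%type.

(* An element of the free abelian group on the generators [P] is represented by a
   finite formal sum  sum_k n_k [P_k]  (list of pairs (n_k, P_k)).  K0_eq is the
   equality of K_0(R): the congruence generated by the laws of the free abelian
   group on isomorphism classes and the relations [P2] = [P1] + [P3]. *)
Definition K0sum := seq (int * FGP).

Inductive K0_step : K0sum -> K0sum -> Prop :=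
| K0_perm s t : Permutation s t -> K0_step s t
| K0_zero (P : FGP) s : K0_step ((0%R, P) :: s) s
| K0_add n m (P : FGP) s : K0_step ((n, P) :: (m, P) :: s) ((n + m, P) :: s)
| K0_iso n (P Q : FGP) s : mod_iso P Q -> K0_step ((n, P) :: s) ((n, Q) :: s)
| K0_rel n (P1 P2 P3 : FGP) s : iso_sum P2 P1 P3 ->
    K0_step ((n, P2) :: s) ((n, P1) :: (n, P3) :: s).

Definition K0_eq : K0sum -> K0sum -> Prop := clos_refl_sym_trans K0sum K0_step.

(* a point b with sign s(b) (true = +1, false = -1) and module P_b *)
Record point := Point { psign : bool; pmod : FGP }.
Definition foam0 := seq point.

Definition neg_foam (M : foam0) : foam0 :=
  map (fun b => Point (~~ psign b) (pmod b)) M.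
(* disjoint union is concatenation ++ *)

Inductive vkind := VIn | VOut | VBdry.

(* The flat bundle over the complement of the trivalent vertices is trivial over
   each edge, so it is given by one fiber efib e per edge (parallel transport
   identifies the fibers along the edge). Vertexless circle components carry a
   fiber and a monodromy automorphism. *)
Record foam1 := {
  fE : finType; fV : finType;
  esrc : fE -> fV; etgt : fE -> fV;
  vk : fV -> vkind;
  efib : fE -> FGP;
  circles : seq {P : FGP & {f : {linear P -> P} | bijective f}};
  f_in_val : forall v, vk v = VIn ->
     #|[pred e | etgt e == v]| = 2%N /\ #|[pred e | esrc e == v]| = 1%N;
  f_out_val : forall v, vk v = VOut ->
     #|[pred e | etgt e == v]| = 1%N /\ #|[pred e | esrc e == v]| = 2%N;
  f_bdry_val : forall v, vk v = VBdry ->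
     (#|[pred e | etgt e == v]| + #|[pred e | esrc e == v]|)%N = 1%N;
  f_in_iso : forall v, vk v = VIn -> forall e1 e2 e, e1 != e2 ->
     etgt e1 = v -> etgt e2 = v -> esrc e = v -> iso_sum (efib e) (efib e1) (efib e2);
  f_out_iso : forall v, vk v = VOut -> forall e1 e2 e, e1 != e2 ->
     esrc e1 = v -> esrc e2 = v -> etgt e = v -> iso_sum (efib e) (efib e1) (efib e2)
}.

(* "boundary of U is isomorphic to M (preserving decorations)":
   a bijection between the points of M and the univalent vertices of U such that
   the sign of a point is +1 iff the edge at the vertex is oriented towards it, and
   the decorating module is isomorphic to the fiber there. *)
Definition bdry_iso (U : foam1) (M : foam0) : Prop :=
  exists f : nat -> fV U,
    (forall i j, (i < length M)%coq_nat -> (j < length M)%coq_nat -> f i = f j -> i = j) /\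
    (forall v, vk v = VBdry -> exists i, (i < length M)%coq_nat /\ f i = v) /\
    (forall i b, List.nth_error M i = Some b ->
       vk (f i) = VBdry /\
       forall e : fE U,
         (etgt e = f i -> psign b = true /\ mod_iso (efib e) (pmod b)) /\
         (esrc e = f i -> psign b = false /\ mod_iso (efib e) (pmod b))).

Definition cobordism (U : foam1) (M0 M1 : foam0) : Prop :=
  bdry_iso U (M1 ++ neg_foam M0).

Definition cobordant (M0 M1 : foam0) : Prop := exists U : foam1, cobordism U M0 M1.

Definition Cob0_eq : foam0 -> foam0 -> Prop := clos_refl_sym_trans foam0 cobordant.

Definition gamma0 (M : foam0) : K0sum :=
  map (fun b => ((if psign b then 1 else -1)%R, pmod b)) M.

End Foams.

(* Main.v *)
From HB Require Import structures.
Require Import Defs.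
From mathcomp Require Import all_boot all_order all_algebra.
From Stdlib Require Import Relation_Operators Permutation.
From mathcomp Require Import zify.
Set Implicit Arguments. Unset Strict Implicit. Unset Printing Implicit Defensive.
Import GRing.Theory.
Local Open Scope ring_scope.

Section Main.
Variable R : pzRingType.
Local Notation K0 := (@K0_eq R).
Local Notation K0s := (K0sum R).

Lemma K0_refl (s : K0s) : K0 s s.
Proof. exact: rst_refl. Qed.
Lemma K0_sym (s t : K0s) : K0 s t -> K0 t s.
Proof. exact: rst_sym. Qed.
Lemma K0_trans (s t u : K0s) : K0 s t -> K0 t u -> K0 s u.
Proof. exact: rst_trans. Qed.
Lemma K0_1 (s t : K0s) : K0_step s t -> K0 s t.
Proof. exact: rst_step. Qed.
Lemma K0_P (s t : K0s) : Permutation s t -> K0 s t.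
Proof. by move=> H; apply: K0_1; apply: K0_perm. Qed.

Lemma K0_step_app (s t u : K0s) : K0_step s t -> K0_step (s ++ u) (t ++ u).
Proof.
case=> {s t}.
- by move=> s t H; apply: K0_perm; apply: Permutation_app_tail.
- by move=> P s; apply: K0_zero.
- by move=> n m P s; apply: K0_add.
- by move=> n P Q s H; apply: K0_iso.
- by move=> n P1 P2 P3 s H; apply: K0_rel.
Qed.

Lemma K0_app_r (s t u : K0s) : K0 s t -> K0 (s ++ u) (t ++ u).
Proof.
elim=> {s t}.
- by move=> s t H; apply: K0_1; apply: K0_step_app.
- by move=> s; apply: K0_refl.
- by move=> s t _ H; apply: K0_sym.
- by move=> s t w _ H1 _ H2; apply: K0_trans H2.
Qed.

Lemma K0_app_l (s t u : K0s) : K0 s t -> K0 (u ++ s) (u ++ t).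
Proof.
move=> H; apply: K0_trans (K0_P (Permutation_app_comm _ _)) _.
apply: K0_trans (K0_app_r u H) _.
exact: K0_P (Permutation_app_comm _ _).
Qed.

Lemma K0_app (s s' t t' : K0s) : K0 s s' -> K0 t t' -> K0 (s ++ t) (s' ++ t').
Proof. by move=> H1 H2; apply: K0_trans (K0_app_r _ H1) (K0_app_l _ H2). Qed.

Lemma K0_cons a (s t : K0s) : K0 s t -> K0 (a :: s) (a :: t).
Proof. exact: (K0_app_l [:: a]). Qed.

Lemma K0_cancel (n : int) (P : FGP R) (s : K0s) : K0 ((n, P) :: (- n, P) :: s) s.
Proof.
apply: K0_trans (K0_1 (K0_add _ _ _ _)) _.
rewrite subrr; exact: K0_1 (K0_zero _ _).
Qed.

Lemma gamma0_cat (M N : foam0 R) : gamma0 (M ++ N) = gamma0 M ++ gamma0 N.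
Proof. exact: map_cat. Qed.

Lemma gamma0_neg (M : foam0 R) : K0 (gamma0 (neg_foam M) ++ gamma0 M) [::].
Proof.
elim: M => [|b M IH] /=; first exact: K0_refl.
apply: (K0_trans (K0_cons _ (K0_P (Permutation_sym (Permutation_middle _ _ _))))).
case: b => [[] P] /=.
  by apply: K0_trans (K0_P (perm_swap _ _ _)) _; apply: K0_trans (K0_cancel _ _ _) IH.
- by apply: K0_trans (K0_cancel _ _ _) IH.
Qed.

Lemma K0_gamma_cob (M0 M1 : foam0 R) :
  K0 (gamma0 (M1 ++ neg_foam M0)) [::] -> K0 (gamma0 M0) (gamma0 M1).
Proof.
rewrite gamma0_cat => H.
apply: K0_sym.
have H2 := K0_app_l (gamma0 M1) (K0_sym (gamma0_neg M0)); rewrite cats0 in H2.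
apply: K0_trans H2 _.
rewrite catA; exact: (K0_app_r (gamma0 M0) H).
Qed.

Definition cp (n : int) (P : FGP R) : foam0 R :=
  match n with Posz k => nseq k (Point true P) | Negz k => nseq k.+1 (Point false P) end.
Definition expand (s : K0s) : foam0 R := flatten (map (fun x => cp x.1 x.2) s).

Lemma expand_gamma (M : foam0 R) : expand (gamma0 M) = M.
Proof. by elim: M => [|[[] P] M IH] //=; rewrite /expand /= in IH *; rewrite IH. Qed.

Lemma surj_cp (n : int) (P : FGP R) : K0 (gamma0 (cp n P)) [:: (n, P)].
Proof.
case: n => k /=.
- elim: k => [|k IH] /=; first exact: K0_sym (K0_1 (K0_zero _ _)).
  apply: K0_trans (K0_cons _ IH) _.
  apply: K0_trans (K0_1 (K0_add _ _ _ _)) _.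
  have -> : 1 + Posz k = Posz k.+1 by lia.
  exact: K0_refl.
- elim: k => [|k IH] /=; first exact: K0_refl.
  apply: K0_trans (K0_cons _ IH) _.
  apply: K0_trans (K0_1 (K0_add _ _ _ _)) _.
  have -> : -1 + Negz k = Negz k.+1 by lia.
  exact: K0_refl.
Qed.

Lemma surj (x : K0s) : K0 (gamma0 (expand x)) x.
Proof.
elim: x => [|[n P] x IH] /=; first exact: K0_refl.
rewrite /expand /= gamma0_cat.
exact: (K0_app (surj_cp n P) IH).
Qed.


Lemma Perm_of_perm_eq (T : eqType) (s t : seq T) : perm_eq s t -> Permutation s t.
Proof.
elim: s t => [|x s IH] t H.
  by move: (perm_size H) => {H}; case: t.
have xt : x \in t by rewrite -(perm_mem H) mem_head.
move: H; case/splitPr: xt => t1 t2 H.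
apply: Permutation_cons_app; apply: IH.
rewrite -(perm_cons x); change (perm_eq (x :: s) (x :: (t1 ++ t2))).
have H2 : perm_eq (t1 ++ x :: t2) (x :: t1 ++ t2) by rewrite -cat1s perm_catCA.
exact: seq.perm_trans H H2.
Qed.

Lemma Perm_to_perm_eq (T : eqType) (s t : seq T) : Permutation s t -> perm_eq s t.
Proof.
elim=> {s t} //.
- by move=> x s t _ H; rewrite perm_cons.
- by move=> x y l; rewrite -[[:: y, x & l]]/([:: y; x] ++ l) -[[:: x, y & l]]/([:: x; y] ++ l) perm_cat2r (perm_catC [:: y] [:: x]).
- by move=> s t u _ H1 _ H2; apply: (seq.perm_trans H1 H2).
Qed.

Lemma Perm_flatten (A : Type) (l l' : seq (seq A)) :
  Permutation l l' -> Permutation (flatten l) (flatten l').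
Proof.
elim=> {l l'} //=.
- by move=> x l l' _ H; apply: Permutation_app_head.
- by move=> x y l; apply: Permutation_app_swap_app.
- by move=> l l' l'' _ H1 _ H2; apply: Permutation_trans H1 H2.
Qed.

Lemma Perm_flat_app (A B : Type) (F G : B -> seq A) (vs : seq B) :
  Permutation (flatten (map (fun v => F v ++ G v) vs))
              (flatten (map F vs) ++ flatten (map G vs)).
Proof.
elim: vs => //= v vs IH; rewrite -!catA; apply: Permutation_app_head.
apply: Permutation_trans (Permutation_app_head _ IH) _.
exact: Permutation_app_swap_app.
Qed.

Lemma perm_group_aux (E V : eqType) (f : E -> V) (vs : seq V) e0 es : uniq vs ->
  perm_eq (flatten [seq [seq e <- e0 :: es | f e == v] | v <- vs])
    (if f e0 \in vs then e0 :: flatten [seq [seq e <- es | f e == v] | v <- vs]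
     else flatten [seq [seq e <- es | f e == v] | v <- vs]).
Proof.
elim: vs => [|v vs IH] //= /andP [Hv Hu].
rewrite in_cons; have [Hv0|Hv0] := eqVneq (f e0) v.
- rewrite -Hv0 in Hv.
  have := IH Hu; rewrite (negPf Hv) => H.
  rewrite /= perm_cons perm_cat2l; exact: H.
- rewrite /=.
  have := IH Hu; case: (f e0 \in vs) => H.
  + apply: (@seq.perm_trans _ ([seq e <- es | f e == v] ++ e0 :: _)).
      rewrite perm_cat2l; exact: H.
    by rewrite -cat1s perm_catCA.
  + rewrite perm_cat2l; exact: H.
Qed.

Lemma flatten_nils (A B : Type) (vs : seq B) : flatten [seq ([::] : seq A) | _ <- vs] = [::].
Proof. by elim: vs. Qed.

Lemma perm_group (E V : finType) (f : E -> V) (es : seq E) :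
  perm_eq (flatten [seq [seq e <- es | f e == v] | v <- enum V]) es.
Proof.
elim: es => [|e0 es IH] /=; first by rewrite flatten_nils.
apply: (seq.perm_trans (perm_group_aux _ _ _ (enum_uniq _))).
by rewrite mem_enum perm_cons.
Qed.

Lemma length_size (T : Type) (s : seq T) : length s = size s.
Proof. by elim: s => //= x s ->. Qed.

Lemma card_filter (T : finType) (p : pred T) : #|[pred e | p e]| = size (filter p (enum T)).
Proof. by rewrite cardE enumT. Qed.

Definition compat (U : foam1 R) (b : point R) (v : fV U) : Prop :=
  vk v = VBdry /\ forall e : fE U,
    (etgt e = v -> psign b = true /\ mod_iso (efib e) (pmod b)) /\
    (esrc e = v -> psign b = false /\ mod_iso (efib e) (pmod b)).

Definition bd (U : foam1 R) (M : foam0 R) : Prop :=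
  exists vl : seq (fV U), uniq vl /\ (forall v, vk v = VBdry -> v \in vl) /\
    List.Forall2 (@compat U) M vl.

Lemma Forall2_of_nth (U : foam1 R) (M : foam0 R) (f : nat -> fV U) k :
  (forall i b, List.nth_error M i = Some b -> compat b (f (k + i)%N)) ->
  List.Forall2 (@compat U) M (map f (iota k (size M))).
Proof.
elim: M k => [|b M IH] k H /=; constructor.
  by have := H 0%N b erefl; rewrite addn0.
apply: IH => i b' Hb; rewrite addSnnS; exact: (H i.+1 b' Hb).
Qed.

Lemma bdry_iso_bd (U : foam1 R) M : bdry_iso U M -> bd U M.
Proof.
case=> f [Hinj [Hsurj Hc]].
exists (map f (iota 0 (size M))); split; [|split].
- rewrite map_inj_in_uniq ?iota_uniq // => i j; rewrite !mem_iota /= !add0n => Hi Hj.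
  by apply: Hinj; rewrite length_size; apply/ltP.
- move=> v /Hsurj [i [Hi <-]]; apply: map_f.
  by rewrite mem_iota add0n -length_size; apply/ltP.
- apply: Forall2_of_nth => i b Hb; rewrite add0n.
  by have [Hv He] := Hc i b Hb; split.
Qed.

Lemma Forall2_nth (U : foam1 R) M vl (v0 : fV U) :
  List.Forall2 (@compat U) M vl ->
  forall i b, List.nth_error M i = Some b -> compat b (nth v0 vl i).
Proof.
elim=> {M vl} [|b v M vl Hbv _ IH] i b' /=; first by case: i.
case: i => [|i] /=; first by case=> <-.
exact: IH.
Qed.

Lemma bd_bdry_iso (U : foam1 R) M (v0 : fV U) : bd U M -> bdry_iso U M.
Proof.
case=> vl [Hu [Hs HF]].
have Hl := List.Forall2_length HF; rewrite !length_size in Hl.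
exists (nth v0 vl); split; [|split].
- move=> i j /ltP Hi /ltP Hj Hij; apply/eqP.
  rewrite length_size Hl in Hi Hj.
  by rewrite -(nth_uniq v0 Hi Hj Hu) Hij.
- move=> v /Hs Hv; exists (index v vl); split; last exact: nth_index.
  by apply/ltP; rewrite length_size Hl index_mem.
- move=> i b Hb; have [Hv He] := Forall2_nth v0 HF Hb; split => //.
Qed.

Lemma Forall2_in_r (U : foam1 R) M vl v :
  List.Forall2 (@compat U) M vl -> v \in vl -> exists b, compat b v.
Proof.
elim=> {M vl} // b w M vl Hbw _ IH; rewrite in_cons => /orP [/eqP ->|/IH //].
by exists b.
Qed.

Lemma K0_cancel2 (n m : int) (P : FGP R) (s : K0s) : n + m = 0 -> K0 ((n, P) :: (m, P) :: s) s.
Proof.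
move=> H; apply: K0_trans (K0_1 (K0_add _ _ _ _)) _.
rewrite H; exact: K0_1 (K0_zero _ _).
Qed.

Lemma K0_tri_in (P1 P2 Pe : FGP R) : iso_sum Pe P1 P2 ->
  K0 [:: (1, P1); (1, P2); (-1, Pe)] [::].
Proof.
move=> H.
apply: K0_trans (K0_P (Permutation_sym (Permutation_cons_append [:: (1, P1); (1, P2)] (-1, Pe)))) _.
apply: K0_trans (K0_1 (K0_rel _ _ H)) _.
apply: K0_trans (K0_cons _ (K0_P (perm_swap _ _ _))) _.
apply: K0_trans (K0_cancel2 _ _ _) _; first by rewrite addNr.
by apply: K0_cancel2; rewrite addNr.
Qed.

Lemma K0_tri_out (P1 P2 Pe : FGP R) : iso_sum Pe P1 P2 ->
  K0 [:: (1, Pe); (-1, P1); (-1, P2)] [::].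
Proof.
move=> H.
apply: K0_trans (K0_1 (K0_rel _ _ H)) _.
apply: K0_trans (K0_cons _ (K0_P (perm_swap _ _ _))) _.
apply: K0_trans (K0_cancel2 _ _ _) _; first by rewrite addrN.
by apply: K0_cancel2; rewrite addrN.
Qed.

Lemma K0_posneg (T : Type) (g : T -> FGP R) (l : seq T) :
  K0 ([seq ((1 : int), g e) | e <- l] ++ [seq (-1, g e) | e <- l]) [::].
Proof.
elim: l => [|e l IH] /=; first exact: K0_refl.
apply: K0_trans (K0_cons _ (K0_P (Permutation_sym (Permutation_middle _ _ _)))) _.
exact: K0_trans (K0_cancel _ _ _) IH.
Qed.

Definition kv (U : foam1 R) (v : fV U) : K0s :=
  [seq (1, efib e) | e <- [seq e <- enum (fE U) | etgt e == v]] ++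
  [seq (-1, efib e) | e <- [seq e <- enum (fE U) | esrc e == v]].

Lemma filter_enum_uniq (T : finType) (p : pred T) : uniq (filter p (enum T)).
Proof. exact: filter_uniq (enum_uniq _). Qed.

Lemma kv_in (U : foam1 R) (v : fV U) : vk v = VIn -> K0 (kv v) [::].
Proof.
move=> Hv; have [H2 H1] := f_in_val Hv; rewrite !card_filter in H2 H1.
rewrite /kv.
have Hu2 := filter_enum_uniq (fun e => etgt e == v).
have M2 : forall e, e \in [seq e <- enum (fE U) | etgt e == v] -> etgt e = v.
  by move=> e; rewrite mem_filter => /andP [/eqP]. 
have M1 : forall e, e \in [seq e <- enum (fE U) | esrc e == v] -> esrc e = v.
  by move=> e; rewrite mem_filter => /andP [/eqP].
move: H2 H1 Hu2 M2 M1.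
case: [seq e <- enum (fE U) | etgt e == v] => [|e1 [|e2 [|? ?]]] //.
case: [seq e <- enum (fE U) | esrc e == v] => [|e [|? ?]] // _ _ /= /andP [].
rewrite inE => He12 _ M2 M1.
apply: K0_tri_in; apply: (f_in_iso Hv He12).
- by apply: M2; rewrite mem_head.
- by apply: M2; rewrite !inE eqxx orbT.
- by apply: M1; rewrite mem_head.
Qed.

Lemma kv_out (U : foam1 R) (v : fV U) : vk v = VOut -> K0 (kv v) [::].
Proof.
move=> Hv; have [H1 H2] := f_out_val Hv; rewrite !card_filter in H2 H1.
rewrite /kv.
have Hu2 := filter_enum_uniq (fun e => esrc e == v).
have M2 : forall e, e \in [seq e <- enum (fE U) | esrc e == v] -> esrc e = v.
  by move=> e; rewrite mem_filter => /andP [/eqP]. 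
have M1 : forall e, e \in [seq e <- enum (fE U) | etgt e == v] -> etgt e = v.
  by move=> e; rewrite mem_filter => /andP [/eqP].
move: H2 H1 Hu2 M2 M1.
case: [seq e <- enum (fE U) | esrc e == v] => [|e1 [|e2 [|? ?]]] //.
case: [seq e <- enum (fE U) | etgt e == v] => [|e [|? ?]] // _ _ /= /andP [].
rewrite inE => He12 _ M2 M1.
apply: K0_tri_out; apply: (f_out_iso Hv He12).
- by apply: M2; rewrite mem_head.
- by apply: M2; rewrite !inE eqxx orbT.
- by apply: M1; rewrite mem_head.
Qed.

Lemma kv_bdry (U : foam1 R) (v : fV U) b : compat b v ->
  K0 (kv v) [:: ((if psign b then 1 else -1), pmod b)].
Proof.
move=> [Hv Hc]; have H := f_bdry_val Hv; rewrite !card_filter in H.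
rewrite /kv.
have M2 : forall e, e \in [seq e <- enum (fE U) | etgt e == v] -> etgt e = v.
  by move=> e; rewrite mem_filter => /andP [/eqP]. 
have M1 : forall e, e \in [seq e <- enum (fE U) | esrc e == v] -> esrc e = v.
  by move=> e; rewrite mem_filter => /andP [/eqP].
move: H M2 M1.
case: [seq e <- enum (fE U) | etgt e == v] => [|e1 [|? ?]];
case: [seq e <- enum (fE U) | esrc e == v] => [|e [|? ?]] //= _ M2 M1.
- have [_ H'] := Hc e; have [Hs Hi] := H' (M1 _ (mem_head _ _)); rewrite Hs.
  exact: K0_1 (K0_iso _ _ Hi).
- have [H' _] := Hc e1; have [Hs Hi] := H' (M2 _ (mem_head _ _)); rewrite Hs.
  exact: K0_1 (K0_iso _ _ Hi).
Qed.

Lemma K0_flatten (A : Type) (F G : A -> K0s) (vs : seq A) :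
  (forall v, K0 (F v) (G v)) -> K0 (flatten (map F vs)) (flatten (map G vs)).
Proof.
move=> H; elim: vs => [|v vs IH] /=; first exact: K0_refl.
exact: K0_app.
Qed.

Lemma flat_map_map (A B C : Type) (f : B -> C) (t : A -> seq B) vs :
  flatten [seq map f (t v) | v <- vs] = map f (flatten (map t vs)).
Proof. by elim: vs => //= v vs ->; rewrite map_cat. Qed.

Definition isb (U : foam1 R) (v : fV U) : bool := if vk v is VBdry then true else false.

Lemma bd_K0 (U : foam1 R) M : bd U M -> K0 (gamma0 M) [::].
Proof.
case=> vl [Hu [Hs HF]].
have S4 : K0 (flatten (map (@kv U) vl)) (gamma0 M).
  elim: HF {Hu Hs} => [|b v M' vl' Hbv _ IH] /=; first exact: K0_refl.
  exact: (K0_app (kv_bdry Hbv) IH).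
have S3 : Permutation (flatten (map (@kv U) [seq v <- enum (fV U) | isb v]))
                      (flatten (map (@kv U) vl)).
  apply: Perm_flatten; apply: Permutation_map; apply: Perm_of_perm_eq.
  apply: uniq_perm => //; first exact: filter_enum_uniq.
  move=> v; rewrite mem_filter mem_enum andbT /isb.
  case Hv: (vk v).
  - apply/esym/negbTE/negP => /(Forall2_in_r HF) [b [Hb _]]; congruence.
  - apply/esym/negbTE/negP => /(Forall2_in_r HF) [b [Hb _]]; congruence.
  - by rewrite Hs.
have S2 : K0 (flatten (map (@kv U) (enum (fV U))))
             (flatten (map (@kv U) [seq v <- enum (fV U) | isb v])).
  have -> : flatten (map (@kv U) [seq v <- enum (fV U) | isb v]) =
            flatten (map (fun v => if isb v then kv v else [::]) (enum (fV U))).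
    by elim: (enum (fV U)) => //= v vs IH; case: (isb v) => /=; rewrite IH.
  apply: K0_flatten => v; rewrite /isb; case Hv: (vk v).
  - exact: kv_in.
  - exact: kv_out.
  - exact: K0_refl.
have S1 : K0 (flatten (map (@kv U) (enum (fV U)))) [::].
  apply: K0_trans (K0_posneg (@efib R U) (enum (fE U))).
  apply: K0_P; rewrite /kv.
  apply: Permutation_trans (Perm_flat_app _ _ _) _.
  apply: Permutation_app.
  - rewrite (flat_map_map (fun e => ((1 : int), efib e))).
    apply: Permutation_map; apply: Perm_of_perm_eq; exact: perm_group.
  - rewrite (flat_map_map (fun e => ((-1 : int), efib e))).
    apply: Permutation_map; apply: Perm_of_perm_eq; exact: perm_group.
apply: K0_trans (K0_sym S4) _.
apply: K0_trans (K0_P (Permutation_sym S3)) _.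
exact: K0_trans (K0_sym S2) S1.
Qed.

Lemma cob_K0 (M0 M1 : foam0 R) : cobordant M0 M1 -> K0 (gamma0 M0) (gamma0 M1).
Proof. by case=> U /bdry_iso_bd /bd_K0; apply: K0_gamma_cob. Qed.

Lemma part1 (M N : foam0 R) : Cob0_eq M N -> K0 (gamma0 M) (gamma0 N).
Proof.
elim=> {M N}.
- by move=> M N; apply: cob_K0.
- by move=> M; apply: K0_refl.
- by move=> M N _; apply: K0_sym.
- by move=> M N P _ H1 _ H2; apply: K0_trans H1 H2.
Qed.


Definition nullb (M : foam0 R) : Prop := exists U : foam1 R, bdry_iso U M.

Lemma nullb_bd (U : foam1 R) M (v0 : fV U) : bd U M -> nullb M.
Proof. by move=> H; exists U; apply: bd_bdry_iso v0 H. Qed.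

Lemma nullb_perm (M M' : foam0 R) : nullb M -> Permutation M M' -> nullb M'.
Proof.
case=> U HU HP.
have [f _] := HU.
have [vl [Hu [Hs HF]]] := bdry_iso_bd HU.
have [vl' [Hvl HF']] := Permutation_Forall2 HP HF.
have Hp := Perm_to_perm_eq Hvl.
apply: (nullb_bd (f 0%N)); exists vl'; split; [|split] => //.
- by rewrite -(perm_uniq Hp).
- by move=> v /Hs; rewrite (perm_mem Hp).
Qed.

Definition smap (A B C D : Type) (f : A -> C) (g : B -> D) (x : A + B) : C + D :=
  match x with inl a => inl (f a) | inr b => inr (g b) end.

Lemma card_sumP (A B : finType) (p : pred (A + B)) :
  #|[pred e | p e]| = (#|[pred a | p (inl a)]| + #|[pred b | p (inr b)]|)%N.
Proof.
rewrite !card_filter !enumT [in LHS]unlock /= /sum_enum filter_cat size_cat !filter_map !size_map.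
by [].
Qed.

Lemma card_smap_l (A B : finType) (T1 T2 : eqType) (f : A -> T1) (g : B -> T2) (v : T1) :
  #|[pred e | smap f g e == inl v]| = #|[pred a | f a == v]|.
Proof.
rewrite card_sumP (@eq_card0 _ [pred b | smap f g (inr b) == inl v]) ?addn0 //.
Qed.

Lemma card_smap_r (A B : finType) (T1 T2 : eqType) (f : A -> T1) (g : B -> T2) (v : T2) :
  #|[pred e | smap f g e == inr v]| = #|[pred b | g b == v]|.
Proof.
rewrite card_sumP (@eq_card0 _ [pred a | smap f g (inl a) == inr v]) ?add0n //.
Qed.

Section Union.
Variables U1 U2 : foam1 R.

Definition uvk (v : (fV U1 + fV U2)%type) : vkind :=
  match v with inl v => vk v | inr v => vk v end.
Definition uefib (e : (fE U1 + fE U2)%type) : FGP R :=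
  match e with inl e => efib e | inr e => efib e end.
Local Notation usrc := (smap (@esrc R U1) (@esrc R U2)).
Local Notation utgt := (smap (@etgt R U1) (@etgt R U2)).

Lemma u_in_val v : uvk v = VIn ->
  #|[pred e | utgt e == v]| = 2%N /\ #|[pred e | usrc e == v]| = 1%N.
Proof.
case: v => v /= Hv; rewrite ?card_smap_l ?card_smap_r; exact: f_in_val Hv.
Qed.

Lemma u_out_val v : uvk v = VOut ->
  #|[pred e | utgt e == v]| = 1%N /\ #|[pred e | usrc e == v]| = 2%N.
Proof.
case: v => v /= Hv; rewrite ?card_smap_l ?card_smap_r; exact: f_out_val Hv.
Qed.

Lemma u_bdry_val v : uvk v = VBdry ->
  (#|[pred e | utgt e == v]| + #|[pred e | usrc e == v]|)%N = 1%N.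
Proof.
case: v => v /= Hv; rewrite ?card_smap_l ?card_smap_r; exact: f_bdry_val Hv.
Qed.

Lemma u_in_iso v : uvk v = VIn -> forall e1 e2 e, e1 != e2 ->
  utgt e1 = v -> utgt e2 = v -> usrc e = v -> iso_sum (uefib e) (uefib e1) (uefib e2).
Proof.
case: v => v /= Hv [e1|e1] [e2|e2] [e|e] //= Hne [H1] [H2] [H3];
  exact: (f_in_iso Hv Hne H1 H2 H3).
Qed.

Lemma u_out_iso v : uvk v = VOut -> forall e1 e2 e, e1 != e2 ->
  usrc e1 = v -> usrc e2 = v -> utgt e = v -> iso_sum (uefib e) (uefib e1) (uefib e2).
Proof.
case: v => v /= Hv [e1|e1] [e2|e2] [e|e] //= Hne [H1] [H2] [H3];
  exact: (f_out_iso Hv Hne H1 H2 H3).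
Qed.

Definition funion : foam1 R :=
  @Build_foam1 R _ _ usrc utgt uvk uefib [::] u_in_val u_out_val u_bdry_val u_in_iso u_out_iso.

Lemma Forall2_map_r (A B C : Type) (P : A -> B -> Prop) (Q : A -> C -> Prop) (f : B -> C) l1 l2 :
  List.Forall2 P l1 l2 -> (forall a b, P a b -> Q a (f b)) -> List.Forall2 Q l1 (map f l2).
Proof. by move=> H HPQ; elim: H => //= a b l1' l2' Hab _ IH; constructor; auto. Qed.

Lemma bd_union M1 M2 : bd U1 M1 -> bd U2 M2 -> bd funion (M1 ++ M2).
Proof.
case=> vl1 [Hu1 [Hs1 HF1]] [vl2 [Hu2 [Hs2 HF2]]].
exists (map inl vl1 ++ map inr vl2); split; [|split].
- rewrite cat_uniq !map_inj_uniq ?Hu1 ?Hu2 //=; try by move=> ? ? [].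
  rewrite andbT; apply/hasPn => x /mapP [y _ ->]; apply/negP => /mapP [z _] //.
- case=> v /= Hv; rewrite mem_cat; apply/orP; [left|right]; apply: map_f; auto.
- apply: List.Forall2_app.
  + apply: (Forall2_map_r HF1) => b v [Hv Hc]; split => //.
    case=> e /=; last by split.
    by have [Ht Hs] := Hc e; split => -[H]; auto.
  + apply: (Forall2_map_r HF2) => b v [Hv Hc]; split => //.
    case=> e /=; first by split.
    by have [Ht Hs] := Hc e; split => -[H]; auto.
Qed.

End Union.

Lemma nullb_app (M1 M2 : foam0 R) : nullb M1 -> nullb M2 -> nullb (M1 ++ M2).
Proof.
case=> U1 H1 [U2 H2].
have [f _] := H1.
apply: (@nullb_bd (funion U1 U2) _ (inl (f 0%N))).
exact: bd_union (bdry_iso_bd H1) (bdry_iso_bd H2).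
Qed.


Ltac cardc := rewrite !cardE /enum_mem; repeat (rewrite unlock /=); done.

Section Edge.
Variable Pe : FGP R.
Definition ed_src (e : unit) : bool := false.
Definition ed_tgt (e : unit) : bool := true.
Definition ed_vk (v : bool) : vkind := VBdry.
Definition ed_fib (e : unit) : FGP R := Pe.

Lemma ed_in_val v : ed_vk v = VIn ->
  #|[pred e | ed_tgt e == v]| = 2%N /\ #|[pred e | ed_src e == v]| = 1%N.
Proof. by []. Qed.
Lemma ed_out_val v : ed_vk v = VOut ->
  #|[pred e | ed_tgt e == v]| = 1%N /\ #|[pred e | ed_src e == v]| = 2%N.
Proof. by []. Qed.
Lemma ed_bdry_val v : ed_vk v = VBdry ->
  (#|[pred e | ed_tgt e == v]| + #|[pred e | ed_src e == v]|)%N = 1%N.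
Proof. by case: v => _; cardc. Qed.
Lemma ed_in_iso v : ed_vk v = VIn -> forall e1 e2 e, e1 != e2 ->
  ed_tgt e1 = v -> ed_tgt e2 = v -> ed_src e = v -> iso_sum (ed_fib e) (ed_fib e1) (ed_fib e2).
Proof. by []. Qed.
Lemma ed_out_iso v : ed_vk v = VOut -> forall e1 e2 e, e1 != e2 ->
  ed_src e1 = v -> ed_src e2 = v -> ed_tgt e = v -> iso_sum (ed_fib e) (ed_fib e1) (ed_fib e2).
Proof. by []. Qed.

Definition fedge : foam1 R :=
  @Build_foam1 R unit bool ed_src ed_tgt ed_vk ed_fib [::]
    ed_in_val ed_out_val ed_bdry_val ed_in_iso ed_out_iso.

Lemma nullb_edge (P1 P2 : FGP R) : mod_iso Pe P1 -> mod_iso Pe P2 ->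
  nullb [:: Point false P1; Point true P2].
Proof.
move=> H1 H2; apply: (@nullb_bd fedge _ false).
exists [:: false; true]; split; [by []|split].
- by case.
- constructor; [|constructor; [|constructor]].
  + by split => // e; split => //.
  + by split => // e; split => //.
Qed.
End Edge.

Lemma mod_iso_refl (P : FGP R) : mod_iso P P.
Proof. exists (idfun : {linear P -> P}); by exists idfun. Qed.

Lemma nullb_pair (s : bool) (P : FGP R) : nullb [:: Point s P; Point (~~ s) P].
Proof.
have H := nullb_edge (mod_iso_refl P) (mod_iso_refl P).
case: s => //=; apply: nullb_perm H _; exact: perm_swap.
Qed.


Definition swapf (A B : lmodType R) (x : A * B) : B * A := (x.2, x.1).
Lemma swapf_lin (A B : lmodType R) : linear (@swapf A B).
Proof. by move=> a [x1 x2] [y1 y2]. Qed.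
HB.instance Definition _ (A B : lmodType R) :=
  GRing.isLinear.Build R (A * B)%type (B * A)%type _ (@swapf A B) (@swapf_lin A B).

Lemma iso_sum_swap (P2 P1 P3 : lmodType R) : iso_sum P2 P1 P3 -> iso_sum P2 P3 P1.
Proof.
case=> f bf; exists (@swapf P1 P3 \o f : {linear _ -> _}).
apply: bij_comp => //; by exists (@swapf P3 P1) => -[].
Qed.

Section Star.
Variables (d : bool) (P1 P2 P3 : FGP R).
Hypothesis Hiso : iso_sum P2 P1 P3.
Definition thin (e : option bool) : bool := if e is Some _ then true else false.
Definition st_src (e : option bool) : option (option bool) := if thin e (+) d then Some e else None.
Definition st_tgt (e : option bool) : option (option bool) := if thin e (+) d then None else Some e.
Definition st_vk (v : option (option bool)) : vkind :=
  if v is Some _ then VBdry else if d then VOut else VIn.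
Definition st_fib (e : option bool) : FGP R :=
  match e with None => P2 | Some false => P1 | Some true => P3 end.

Lemma st_in_val v : st_vk v = VIn ->
  #|[pred e | st_tgt e == v]| = 2%N /\ #|[pred e | st_src e == v]| = 1%N.
Proof. rewrite /st_vk /st_tgt /st_src; case: v => [v|]; case: d => // _; split; cardc. Qed.
Lemma st_out_val v : st_vk v = VOut ->
  #|[pred e | st_tgt e == v]| = 1%N /\ #|[pred e | st_src e == v]| = 2%N.
Proof. rewrite /st_vk /st_tgt /st_src; case: v => [v|]; case: d => // _; split; cardc. Qed.
Lemma st_bdry_val v : st_vk v = VBdry ->
  (#|[pred e | st_tgt e == v]| + #|[pred e | st_src e == v]|)%N = 1%N.
Proof. rewrite /st_vk /st_tgt /st_src; case: v => [[[]|]|]; case: d => // _; cardc. Qed.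
Lemma st_in_iso v : st_vk v = VIn -> forall e1 e2 e, e1 != e2 ->
  st_tgt e1 = v -> st_tgt e2 = v -> st_src e = v -> iso_sum (st_fib e) (st_fib e1) (st_fib e2).
Proof.
rewrite /st_vk /st_tgt /st_src; case: v => [v|]; case: d => // _;
case=> [[]|] [[]|] [[]|] //= Hne H1 H2 H3; try discriminate;
first [exact: Hiso | exact: iso_sum_swap Hiso | by rewrite eqxx in Hne].
Qed.
Lemma st_out_iso v : st_vk v = VOut -> forall e1 e2 e, e1 != e2 ->
  st_src e1 = v -> st_src e2 = v -> st_tgt e = v -> iso_sum (st_fib e) (st_fib e1) (st_fib e2).
Proof.
rewrite /st_vk /st_tgt /st_src; case: v => [v|]; case: d => // _;
case=> [[]|] [[]|] [[]|] //= Hne H1 H2 H3; try discriminate;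
first [exact: Hiso | exact: iso_sum_swap Hiso | by rewrite eqxx in Hne].
Qed.

Definition fstar : foam1 R :=
  @Build_foam1 R (option bool) (option (option bool)) st_src st_tgt st_vk st_fib [::]
    st_in_val st_out_val st_bdry_val st_in_iso st_out_iso.

Lemma nullb_star : nullb [:: Point (~~ d) P2; Point d P1; Point d P3].
Proof.
apply: (@nullb_bd fstar _ None).
exists [:: Some None; Some (Some false); Some (Some true)]; split; [by []|split].
- by case=> [[[]|]|] //=; rewrite /st_vk; case: d.
- have R1 := mod_iso_refl.
  rewrite /compat /=.
  constructor; [|constructor; [|constructor; [|constructor]]];
  (split; [by []|]); case=> [[]|]; rewrite /st_tgt /st_src /=; case: d => /=;
  split => // _; split => //.
Qed.
End Star.


Local Notation C0 := (@Cob0_eq R).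

Lemma C0_refl (M : foam0 R) : C0 M M. Proof. exact: rst_refl. Qed.
Lemma C0_sym (M N : foam0 R) : C0 M N -> C0 N M. Proof. exact: rst_sym. Qed.
Lemma C0_trans (M N P : foam0 R) : C0 M N -> C0 N P -> C0 M P. Proof. exact: rst_trans. Qed.
Lemma C0_null (M0 M1 : foam0 R) : nullb (M1 ++ neg_foam M0) -> C0 M0 M1.
Proof. by move=> H; apply: rst_step. Qed.

Lemma nullb_cyl (b : point R) C : nullb ((b :: C) ++ neg_foam (b :: C)).
Proof.
elim: C b => [|c C IH] b.
  by case: b => s P; exact: nullb_pair.
case: b => s P.
have H := nullb_app (nullb_pair s P) (IH c).
apply: (nullb_perm H) => /=.
apply: perm_skip; exact: (Permutation_middle (c :: C) _ _).
Qed.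

Lemma C0_perm (A B : foam0 R) : Permutation A B -> C0 A B.
Proof.
case: A => [|a A] HP.
  by rewrite (Permutation_nil HP); exact: C0_refl.
apply: C0_null; apply: (nullb_perm (nullb_cyl a A)).
exact: (Permutation_app_tail (neg_foam (a :: A)) HP).
Qed.

Lemma C0_app_r (A B C : foam0 R) : C0 A B -> C0 (A ++ C) (B ++ C).
Proof.
case: C => [|c C]; first by rewrite !cats0.
elim=> {A B}.
- move=> A B [U HU]; apply: C0_null.
  have H := nullb_app (ex_intro _ U HU) (nullb_cyl c C).
  apply: (nullb_perm H).
  rewrite /neg_foam map_cat -/(neg_foam A) -/(neg_foam (c :: C)) -!catA.
  exact: (Permutation_app_head B (Permutation_app_swap_app (neg_foam A) (c :: C) (neg_foam (c :: C)))).
- by move=> A; exact: C0_refl.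
- by move=> A B _; exact: C0_sym.
- by move=> A B D _ H1 _ H2; exact: C0_trans H1 H2.
Qed.

Lemma C0_app_l (A B C : foam0 R) : C0 A B -> C0 (C ++ A) (C ++ B).
Proof.
move=> H; apply: C0_trans (C0_perm (Permutation_app_comm _ _)) _.
apply: C0_trans (C0_app_r C H) _.
exact: C0_perm (Permutation_app_comm _ _).
Qed.

Lemma C0_cons (x : point R) (A B : foam0 R) : C0 A B -> C0 (x :: A) (x :: B).
Proof. exact: (C0_app_l [:: x]). Qed.

Lemma C0_cancel (s : bool) (P : FGP R) (L : foam0 R) :
  C0 L (Point s P :: Point (~~ s) P :: L).
Proof.
have H : C0 [::] [:: Point s P; Point (~~ s) P].
  by apply: C0_null; exact: nullb_pair.
exact: (C0_app_r L H).
Qed.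

Lemma C0_iso (s : bool) (P Q : FGP R) : mod_iso P Q -> C0 [:: Point s P] [:: Point s Q].
Proof.
move=> H; apply: C0_null => /=.
case: s => /=.
- apply: (nullb_perm (nullb_edge (mod_iso_refl P) H)); exact: perm_swap.
- exact: nullb_edge H (mod_iso_refl P).
Qed.

Lemma C0_rel (s : bool) (P1 P2 P3 : FGP R) : iso_sum P2 P1 P3 ->
  C0 [:: Point s P2] [:: Point s P1; Point s P3].
Proof.
move=> H; apply: C0_null => /=.
apply: (nullb_perm (nullb_star s H)).
exact: (Permutation_cons_append [:: Point s P1; Point s P3]).
Qed.

Lemma ns_iso (s : bool) (P Q : FGP R) k : mod_iso P Q ->
  C0 (nseq k (Point s P)) (nseq k (Point s Q)).
Proof.
move=> H; elim: k => [|k IH] /=; first exact: C0_refl.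
apply: C0_trans (C0_app_r _ (C0_iso s H)) _.
exact: C0_cons IH.
Qed.

Lemma ns_rel (s : bool) (P1 P2 P3 : FGP R) k : iso_sum P2 P1 P3 ->
  C0 (nseq k (Point s P2)) (nseq k (Point s P1) ++ nseq k (Point s P3)).
Proof.
move=> H; elim: k => [|k IH] /=; first exact: C0_refl.
apply: C0_trans (C0_app_r _ (C0_rel s H)) _.
apply: C0_trans (C0_app_l [:: Point s P1; Point s P3] IH) _.
apply: C0_perm => /=; apply: perm_skip; exact: Permutation_middle.
Qed.

Lemma cp_iso n (P Q : FGP R) : mod_iso P Q -> C0 (cp n P) (cp n Q).
Proof. by case: n => k H /=; [exact: ns_iso | exact: (ns_iso false k.+1 H)]. Qed.

Lemma cp_rel n (P1 P2 P3 : FGP R) : iso_sum P2 P1 P3 -> C0 (cp n P2) (cp n P1 ++ cp n P3).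
Proof. by case: n => k H /=; [exact: ns_rel | exact: (ns_rel false k.+1 H)]. Qed.

Lemma cpS n (P : FGP R) : C0 (cp (n + 1) P) (Point true P :: cp n P).
Proof.
case: n => k.
- have -> : Posz k + 1 = Posz k.+1 by lia.
  exact: C0_refl.
- case: k => [|k].
  + have -> : Negz 0 + 1 = 0 by lia.
    exact: (C0_cancel true P [::]).
  + have -> : Negz k.+1 + 1 = Negz k by lia.
    exact: (C0_cancel true P (cp (Negz k) P)).
Qed.

Lemma cpN n (P : FGP R) : C0 (cp (n - 1) P) (Point false P :: cp n P).
Proof.
case: n => k.
- case: k => [|k].
  + have -> : Posz 0 - 1 = Negz 0 by lia.
    exact: C0_refl.
  + have -> : Posz k.+1 - 1 = Posz k by lia.
    exact: (C0_cancel false P (cp (Posz k) P)).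
- have -> : Negz k - 1 = Negz k.+1 by lia.
  exact: C0_refl.
Qed.

Lemma cp_add n m (P : FGP R) : C0 (cp n P ++ cp m P) (cp (n + m) P).
Proof.
case: m => k.
- elim: k => [|k IH].
    by rewrite /= cats0 addr0; exact: C0_refl.
  have -> : n + Posz k.+1 = (n + Posz k) + 1 by lia.
  apply: C0_trans (C0_perm (Permutation_sym (Permutation_middle _ _ _))) _.
  apply: C0_trans (C0_cons _ IH) _.
  exact: C0_sym (cpS _ _).
- elim: k => [|k IH].
    have -> : n + Negz 0 = n - 1 by lia.
    apply: C0_trans (C0_perm (Permutation_sym (Permutation_middle _ _ _))) _.
    rewrite List.app_nil_r; exact: C0_sym (cpN _ _).
  have -> : n + Negz k.+1 = (n + Negz k) - 1 by lia.
  apply: C0_trans (C0_perm (Permutation_sym (Permutation_middle (cp n P) (cp (Negz k) P) (Point false P)))) _.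
  apply: C0_trans (C0_cons _ IH) _.
  exact: C0_sym (cpN _ _).
Qed.

Lemma expand_step (s t : K0s) : K0_step s t -> C0 (expand s) (expand t).
Proof.
case=> {s t}.
- move=> s t H; apply: C0_perm; apply: Perm_flatten; exact: Permutation_map.
- by move=> P s; exact: C0_refl.
- move=> n m P s; rewrite /expand /= catA; apply: C0_app_r; exact: cp_add.
- move=> n P Q s H; rewrite /expand /=; apply: C0_app_r; exact: cp_iso.
- move=> n P1 P2 P3 s H; rewrite /expand /= catA; apply: C0_app_r; exact: cp_rel.
Qed.

Lemma expand_K0 (s t : K0s) : K0 s t -> C0 (expand s) (expand t).
Proof.
elim=> {s t}.
- by move=> s t; apply: expand_step.
- by move=> s; apply: C0_refl.
- by move=> s t _; apply: C0_sym.
- by move=> s t u _ H1 _ H2; apply: C0_trans H1 H2.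
Qed.

Lemma inj (M N : foam0 R) : K0 (gamma0 M) (gamma0 N) -> C0 M N.
Proof. by move/expand_K0; rewrite !expand_gamma. Qed.

End Main.

Local Close Scope ring_scope.

Theorem mainTheorem1 (R : pzRingType) :
  (* well defined on Cob_0(R) *)
  (forall M N : foam0 R, Cob0_eq M N -> K0_eq (gamma0 M) (gamma0 N)) /\
  (* homomorphism: disjoint union to sum, inverse to inverse *)
  (forall M N : foam0 R, K0_eq (gamma0 (M ++ N)) (gamma0 M ++ gamma0 N)) /\
  (forall M : foam0 R, K0_eq (gamma0 (neg_foam M) ++ gamma0 M) [::]) /\
  (* injective *)
  (forall M N : foam0 R, K0_eq (gamma0 M) (gamma0 N) -> Cob0_eq M N) /\
  (* surjective *)
  (forall x : K0sum R, exists M : foam0 R, K0_eq (gamma0 M) x).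
Proof.
split; first exact: part1.
split; first by move=> M N; rewrite gamma0_cat; exact: K0_refl.
split; first exact: gamma0_neg.
split; first exact: inj.
by move=> x; exists (expand x); exact: surj.
Qed.
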